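(* Let $n$ be a natural number and let $(L_x)_{x\in S}$ be an $S$-glued system in which every $L_x$ is semimodular of breadth at most $n$. Then its $S$-glued sum $L$ is semimodular and has breadth at most $n$.
   Context: Let $S$ be a lattice of finite length (every chain in $S$ is finite), with order $\le$, join $\vee$ and meet $\wedge$; $x\prec y$ means that $y$ covers $x$. An \emph{$S$-glued system} is a family $(L_x,\le_x)_{x\in S}$ of lattices of finite length (with join $+_x$, meet $\cdot_x$, least element $0_x$, greatest element $1_x$), whose underlying sets may overlap, such that for all $x,y\in S$: (1) if $x\le y$ and $L_x\cap L_y\ne\emptyset$, then $L_x\cap L_y$ is a filter of $L_x$ and an ideal of $L_y$; (2) in the situation of (1), for all $a,b\in L_x\cap L_y$: $a\le_x b$ iff $a\le_y b$; (3) if $x\prec y$ then $L_x\cap L_y\ne\emptyset$; (4) $L_x\cap L_y\subseteq L_{x\wedge y}\cap L_{x\vee y}$. The \emph{$S$-glued sum} of the system is the set $L=\bigcup_{x\in S}L_x$ equipped with the relation $\le$ defined as the transitive closure of $\bigcup_{x\in S}\le_x$; it is a lattice. A lattice $K$ of finite length is \emph{semimodular} if whenever $b\ne c$ both cover $a$ in $K$, then $b\vee c$ covers both $b$ and $c$. The \emph{breadth} of a lattice $K$ is the supremum of all $m$ for which there is a map $\varphi$ from the Boolean lattice $\mathbf{2}^m$ (all subsets of an $m$-element set) into $K$ with $\varphi(a)\le\varphi(b)\iff a\le b$ for all $a,b$. *)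

(* Defs.v *)
From HB Require Import structures.
From mathcomp Require Import all_boot all_order.
From Stdlib Require Import Relations.Relation_Operators.
From Stdlib Require List.
Set Implicit Arguments. Unset Strict Implicit. Unset Printing Implicit Defensive.
Import Order.Theory.

Section RelLattice.
Variables (T : Type) (A : T -> Prop) (le : T -> T -> Prop).

Definition is_poset : Prop :=
  (forall a, A a -> le a a) /\
  (forall a b, A a -> A b -> le a b -> le b a -> a = b) /\
  (forall a b c, A a -> A b -> A c -> le a b -> le b c -> le a c).

Definition is_lub (j a b : T) : Prop :=
  A j /\ le a j /\ le b j /\ forall z, A z -> le a z -> le b z -> le j z.

Definition is_glb (m a b : T) : Prop :=
  A m /\ le m a /\ le m b /\ forall z, A z -> le z a -> le z b -> le z m.

Definition is_lattice : Prop :=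
  is_poset /\ forall a b, A a -> A b ->
    (exists j, is_lub j a b) /\ (exists m, is_glb m a b).

Definition is_chain (C : T -> Prop) : Prop :=
  (forall x, C x -> A x) /\ (forall x y, C x -> C y -> le x y \/ le y x).

Definition finite_length : Prop :=
  forall C, is_chain C -> exists s : seq T, forall x, C x -> List.In x s.

Definition covers (a b : T) : Prop :=
  A a /\ A b /\ le a b /\ a <> b /\
  forall z, A z -> le a z -> le z b -> z = a \/ z = b.

Definition semimodular : Prop :=
  forall a b c, b <> c -> covers a b -> covers a c ->
    forall j, is_lub j b c -> covers b j /\ covers c j.

Definition breadth_le (n : nat) : Prop :=
  forall (m : nat) (phi : {set 'I_m} -> T),
    (forall X, A (phi X)) ->
    (forall X Y, le (phi X) (phi Y) <-> X \subset Y) ->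
    (m <= n)%N.

Definition is_filter (F : T -> Prop) : Prop :=
  (exists a, F a) /\ (forall a, F a -> A a) /\
  (forall a b, F a -> A b -> le a b -> F b) /\
  (forall a b m, F a -> F b -> is_glb m a b -> F m).

Definition is_ideal (I : T -> Prop) : Prop :=
  (exists a, I a) /\ (forall a, I a -> A a) /\
  (forall a b, I a -> A b -> le b a -> I b) /\
  (forall a b j, I a -> I b -> is_lub j a b -> I j).

End RelLattice.

(* S-glued systems: S is a lattice (mathcomp latticeType) of finite length;
   L x is the underlying set of the lattice L_x inside a common universe U,
   with order le x. *)
Definition glued_system (d : Order.disp_t) (S : latticeType d) (U : Type)
    (L : S -> U -> Prop) (le : S -> U -> U -> Prop) : Prop :=
  finite_length (fun _ : S => True) (fun x y => (x <= y)%O) /\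
  (forall x, is_lattice (L x) (le x) /\ finite_length (L x) (le x)) /\
  (forall x y : S, (x <= y)%O -> (exists a, L x a /\ L y a) ->
     is_filter (L x) (le x) (fun a => L x a /\ L y a) /\
     is_ideal (L y) (le y) (fun a => L x a /\ L y a)) /\
  (forall x y : S, (x <= y)%O -> (exists a, L x a /\ L y a) ->
     forall a b, L x a -> L y a -> L x b -> L y b -> (le x a b <-> le y a b)) /\
  (forall x y : S, covers (fun _ : S => True) (fun u v => (u <= v)%O) x y ->
     exists a, L x a /\ L y a) /\
  (forall (x y : S) a, L x a -> L y a -> L (x `&` y)%O a /\ L (x `|` y)%O a).

Definition glued_carrier (d : Order.disp_t) (S : latticeType d) (U : Type)
    (L : S -> U -> Prop) : U -> Prop :=
  fun a => exists x, L x a.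

Definition glued_le (d : Order.disp_t) (S : latticeType d) (U : Type)
    (L : S -> U -> Prop) (le : S -> U -> U -> Prop) : U -> U -> Prop :=
  clos_trans U (fun a b => exists x, L x a /\ L x b /\ le x a b).

(* Main.v *)
Require Import Defs.
From mathcomp Require Import all_boot all_order.
From Stdlib Require Import Relations.Relation_Operators Relations.Operators_Properties.
From Stdlib Require Import Classical ClassicalEpsilon FinFun Lia.
From Stdlib Require List.
From Stdlib Require Import Wellfounded.Inclusion.
Set Implicit Arguments. Unset Strict Implicit. Unset Printing Implicit Defensive.
Import Order.Theory.
Set Bullet Behavior "Strict Subproofs".

Section Generic.
Variables (T : Type) (A : T -> Prop) (le : T -> T -> Prop).

Definition slt a b := A a /\ A b /\ le a b /\ a <> b.

Lemma wf_min (R : T -> T -> Prop) (wf : well_founded R) (P : T -> Prop) x :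
  P x -> exists m, P m /\ forall y, P y -> ~ R y m.
Proof.
induction x as [x IH] using (well_founded_ind wf); intros Px.
destruct (classic (exists y, P y /\ R y x)) as [[y [Py Ryx]]|H].
- exact (IH y Ryx Py).
- exists x; split; [exact Px|]. intros y Py Ryx; apply H; eauto.
Qed.

Hypothesis Hpo : is_poset A le.
Hypothesis Hfl : finite_length A le.

Lemma slt_wf : well_founded slt.
Proof.
destruct Hpo as [Hr [Ha Ht]].
intros x; apply NNPP; intro Hx.
assert (Hstep : forall y, ~ Acc slt y -> exists z, slt z y /\ ~ Acc slt z).
{ intros y Hy. apply NNPP; intro H. apply Hy. constructor. intros z Hz.
  apply NNPP. intro Hz'. apply H. eauto. }
pose g : {y | ~ Acc slt y} -> {y | ~ Acc slt y} := fun s =>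
  let (y, py) := s in
  let (z, hz) := constructive_indefinite_description _ (Hstep y py) in
  exist _ z (proj2 hz).
pose f n := proj1_sig (iter n g (exist _ x Hx)).
assert (Hf : forall n, slt (f n.+1) (f n)).
{ intros n. rewrite /f /=. destruct (iter n g (exist _ x Hx)) as [y py]; simpl.
  destruct (constructive_indefinite_description _ (Hstep y py)) as [z hz]; simpl.
  exact (proj1 hz). }
assert (HA : forall n, A (f n)).
{ intros n. destruct (Hf n) as [_ [H _]]. exact H. }
assert (Hc : forall d i, le (f (i + d)%N) (f i)).
{ induction d as [|d IH]; intros i.
  - rewrite addn0. apply Hr, HA.
  - rewrite addnS. destruct (Hf (i + d)%N) as [H1 [H2 [H3 _]]].
    apply (Ht _ _ _ H1 H2 (HA i) H3 (IH i)). }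
assert (Hne : forall i j, (i < j)%N -> f i <> f j).
{ intros i j Hij E.
  destruct (Hf i) as [H1 [H2 [H3 H4]]].
  apply H4. apply Ha; auto.
  have := Hc (j - i.+1)%N i.+1. rewrite subnKC //. rewrite -E. auto. }
assert (Hinj : Injective f).
{ intros i j E. destruct (ltngtP i j) as [h|h|h]; auto.
  - exfalso; exact (Hne _ _ h E).
  - exfalso; exact (Hne _ _ h (esym E)). }
destruct (Hfl (C := fun y => exists n, y = f n)) as [s Hs].
{ split.
  - intros y [n ->]. apply HA.
  - intros y z [i ->] [j ->]. destruct (leqP i j) as [h|h].
    + right. have := Hc (j - i)%N i. rewrite subnKC //.
    + left. have := Hc (i - j)%N j. rewrite subnKC //. apply ltnW; exact h. }
have H1 := Injective_map_NoDup Hinj (List.seq_NoDup (List.length s).+1 0).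
have H2 : List.incl (List.map f (List.seq 0 (List.length s).+1)) s.
{ intros y Hy. apply List.in_map_iff in Hy. destruct Hy as [n [<- _]]. apply Hs. eauto. }
have := List.NoDup_incl_length H1 H2. rewrite List.length_map List.length_seq. lia.
Qed.

Lemma bot_ex x : is_lattice A le -> A x -> exists b, A b /\ forall a, A a -> le b a.
Proof.
intros [Hp' Hl] Ax.
destruct (wf_min slt_wf Ax) as [m [Am Hm]].
exists m; split; auto. intros a Aa.
destruct (Hl m a Am Aa) as [_ [g [Ag [Hgm [Hga _]]]]].
destruct (classic (g = m)) as [->|Hne]; auto.
exfalso; apply (Hm g Ag). repeat split; auto.
Qed.

End Generic.

Lemma flip_poset T (A : T -> Prop) le : is_poset A le -> is_poset A (fun a b => le b a).
Proof. intros [H1 [H2 H3]]; repeat split; eauto. Qed.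
Lemma flip_fl T (A : T -> Prop) le : finite_length A le -> finite_length A (fun a b => le b a).
Proof. intros H C [HC1 HC2]. apply H. split; [exact HC1|]. intros x y Hx Hy; destruct (HC2 x y Hx Hy); auto. Qed.
Lemma flip_lattice T (A : T -> Prop) le : is_lattice A le -> is_lattice A (fun a b => le b a).
Proof.
intros [Hp Hl]. split; [apply flip_poset; auto|].
intros a b Ha Hb. destruct (Hl a b Ha Hb) as [[j Hj] [m Hm]]. split.
- exists m. destruct Hm as [? [? [? ?]]]. repeat split; auto.
- exists j. destruct Hj as [? [? [? ?]]]. repeat split; auto.
Qed.

Lemma top_ex T (A : T -> Prop) le x : is_lattice A le -> finite_length A le -> A x ->
  exists b, A b /\ forall a, A a -> le a b.
Proof.
intros Hl Hf Ax. have Hl' := flip_lattice Hl.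
destruct (bot_ex (flip_poset (proj1 Hl)) (flip_fl Hf) Hl' Ax) as [b Hb]. exists b; exact Hb.
Qed.

Section Glued.
Variables (d : Order.disp_t) (S : latticeType d) (U : Type)
  (L : S -> U -> Prop) (le : S -> U -> U -> Prop).
Hypothesis HG : glued_system L le.

Local Notation gl := (glued_le L le).
Local Notation car := (glued_carrier L).
Local Notation covS := (covers (fun _ : S => True) (fun u v : S => (u <= v)%O)).

Lemma HflS : finite_length (fun _ : S => True) (fun x y : S => (x <= y)%O).
Proof. exact (proj1 HG). Qed.
Lemma Hlat x : is_lattice (L x) (le x).
Proof. exact (proj1 (proj1 (proj2 HG) x)). Qed.
Lemma Hflb x : finite_length (L x) (le x).
Proof. exact (proj2 (proj1 (proj2 HG) x)). Qed.
Lemma H1 x y : (x <= y)%O -> (exists a, L x a /\ L y a) ->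
     is_filter (L x) (le x) (fun a => L x a /\ L y a) /\
     is_ideal (L y) (le y) (fun a => L x a /\ L y a).
Proof. exact (proj1 (proj2 (proj2 HG)) x y). Qed.
Lemma H2 x y : (x <= y)%O -> (exists a, L x a /\ L y a) ->
     forall a b, L x a -> L y a -> L x b -> L y b -> (le x a b <-> le y a b).
Proof. exact (proj1 (proj2 (proj2 (proj2 HG))) x y). Qed.
Lemma H3 x y : covS x y -> exists a, L x a /\ L y a.
Proof. exact (proj1 (proj2 (proj2 (proj2 (proj2 HG)))) x y). Qed.
Lemma H4 x y a : L x a -> L y a -> L (x `&` y)%O a /\ L (x `|` y)%O a.
Proof. exact (proj2 (proj2 (proj2 (proj2 (proj2 HG)))) x y a). Qed.

Lemma posetS : is_poset (fun _ : S => True) (fun x y : S => (x <= y)%O).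
Proof.
repeat split.
- intros a _; exact (le_refl a).
- intros a b _ _ h1 h2; apply/le_anti; by rewrite h1 h2.
- intros a b c _ _ _ h1 h2; exact (le_trans h1 h2).
Qed.

Lemma wfS_lt : well_founded (fun x y : S => (x < y)%O).
Proof.
apply (@wf_incl _ _ (slt (fun _ : S => True) (fun x y : S => (x <= y)%O))).
- intros x y Hxy. move: Hxy; rewrite lt_neqAle => /andP [Hne Hle].
  repeat split => //. by apply/eqP.
- exact (slt_wf posetS HflS).
Qed.

Lemma wfS_gt : well_founded (fun x y : S => (y < x)%O).
Proof.
apply (@wf_incl _ _ (slt (fun _ : S => True) (fun x y : S => (y <= x)%O))).
- intros x y Hxy. move: Hxy; rewrite lt_neqAle => /andP [Hne Hle].
  repeat split => //. move/eqP: Hne => Hne E; apply Hne; by rewrite E.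
- exact (slt_wf (flip_poset posetS) (flip_fl HflS)).
Qed.

Lemma ltS (x y : S) : (x <= y)%O -> x <> y -> (x < y)%O.
Proof. intros h ne. rewrite lt_neqAle h andbT. by apply/eqP. Qed.

Lemma cov_ex (x y : S) : (x < y)%O -> exists x1, covS x x1 /\ (x1 <= y)%O.
Proof.
intros Hxy.
destruct (wf_min wfS_lt (P := fun t => (x < t)%O /\ (t <= y)%O) (conj Hxy (le_refl y)))
  as [m [[Hxm Hmy] Hmin]].
exists m; split; auto.
move: (Hxm); rewrite lt_neqAle => /andP [Hne Hle].
split; [done|split; [done|split; [exact Hle|split]]].
- move/eqP: Hne; auto.
- intros z _ Hxz Hzm. destruct (classic (z = x)) as [->|Hzx]; [by left|right].
  destruct (classic (z = m)) as [->|Hzm']; [done|exfalso].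
  apply (Hmin z); [split; [by apply ltS; auto|exact (le_trans Hzm Hmy)]|by apply ltS].
Qed.

Lemma lrefl x a : L x a -> le x a a.
Proof. intros h. exact (proj1 (proj1 (Hlat x)) a h). Qed.
Lemma ltrans x a b c : L x a -> L x b -> L x c -> le x a b -> le x b c -> le x a c.
Proof. intros. exact (proj2 (proj2 (proj1 (Hlat x))) a b c H H0 H5 H6 H7). Qed.
Lemma lanti x a b : L x a -> L x b -> le x a b -> le x b a -> a = b.
Proof. intros. exact (proj1 (proj2 (proj1 (Hlat x))) a b H H0 H5 H6). Qed.
Lemma lub_ex x a b : L x a -> L x b -> exists j, is_lub (L x) (le x) j a b.
Proof. intros. exact (proj1 (proj2 (Hlat x) a b H H0)). Qed.
Lemma glb_ex x a b : L x a -> L x b -> exists j, is_glb (L x) (le x) j a b.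
Proof. intros. exact (proj2 (proj2 (Hlat x) a b H H0)). Qed.

Lemma filt (x y : S) a b : (x <= y)%O -> L x a -> L y a -> L x b -> le x a b -> L y b.
Proof.
intros Hxy Lxa Lya Lxb Hab.
destruct (H1 Hxy (ex_intro _ a (conj Lxa Lya))) as [[_ [_ [Hup _]]] _].
exact (proj2 (Hup a b (conj Lxa Lya) Lxb Hab)).
Qed.

Lemma idl (x y : S) a b : (x <= y)%O -> L x a -> L y a -> L y b -> le y b a -> L x b.
Proof.
intros Hxy Lxa Lya Lyb Hba.
destruct (H1 Hxy (ex_intro _ a (conj Lxa Lya))) as [_ [_ [_ [Hdn _]]]].
exact (proj1 (Hdn a b (conj Lxa Lya) Lyb Hba)).
Qed.

Lemma lub_idl (x y : S) t1 t2 l : (x <= y)%O -> L x t1 -> L y t1 -> L x t2 -> L y t2 ->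
  is_lub (L y) (le y) l t1 t2 -> L x l.
Proof.
intros Hxy L1 L1' L2 L2' Hl.
destruct (H1 Hxy (ex_intro _ t1 (conj L1 L1'))) as [_ [_ [_ [_ Hj]]]].
exact (proj1 (Hj t1 t2 l (conj L1 L1') (conj L2 L2') Hl)).
Qed.

Lemma agr (x y : S) a b : L x a -> L x b -> L y a -> L y b -> le x a b -> le y a b.
Proof.
intros Lxa Lxb Lya Lyb Hab.
destruct (H4 Lxa Lya) as [Ma _]. destruct (H4 Lxb Lyb) as [Mb _].
have e1 := H2 (leIl x y) (ex_intro _ a (conj Ma Lxa)) Ma Lxa Mb Lxb.
have e2 := H2 (leIr y x) (ex_intro _ a (conj Ma Lya)) Ma Lya Mb Lyb.
apply e2, e1, Hab.
Qed.

Lemma CV (z v : S) : forall u a, (u <= z)%O -> (z <= v)%O -> L u a -> L v a -> L z a.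
Proof.
intros u; induction u as [u IH] using (well_founded_ind wfS_gt).
intros a Huz Hzv Lua Lva.
destruct (classic (u = z)) as [<-|Hne]; [exact Lua|].
destruct (cov_ex (ltS Huz Hne)) as [u1 [Hc Hu1z]].
destruct (H3 Hc) as [b [Lub Lu1b]].
destruct (lub_ex Lua Lub) as [c [Luc [Hac [Hbc _]]]].
have Huu1 : (u <= u1)%O := proj1 (proj2 (proj2 Hc)).
have Hne1 : u <> u1 := proj1 (proj2 (proj2 (proj2 Hc))).
have Luv : (u <= v)%O := le_trans Huz Hzv.
have Lu1c := filt Huu1 Lub Lu1b Luc Hbc.
have Lvc := filt Luv Lua Lva Luc Hac.
have Hvac := agr Lua Luc Lva Lvc Hac.
have Lu1a := idl (le_trans Hu1z Hzv) Lu1c Lvc Lva Hvac.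
exact (IH u1 (ltS Huu1 Hne1) a Hu1z Hzv Lu1a Lva).
Qed.

Lemma M1 a b : gl a b -> forall y, L y a -> exists v, (y <= v)%O /\ L v b.
Proof.
unfold glued_le; intros H; induction H as [a b [x [Lxa [Lxb Hab]]] | a m b _ IH1 _ IH2];
  intros y Lya.
- exists (x `|` y)%O. split; [exact (leUr y x)|].
  destruct (H4 Lxa Lya) as [_ J]. exact (filt (leUl x y) Lxa J Lxb Hab).
- destruct (IH1 y Lya) as [v1 [h1 Lv1m]]. destruct (IH2 v1 Lv1m) as [v2 [h2 Lv2b]].
  exists v2; split; [exact (le_trans h1 h2)|exact Lv2b].
Qed.

Lemma M2 a b : gl a b -> forall y, L y b -> exists u, (u <= y)%O /\ L u a.
Proof.
unfold glued_le; intros H; induction H as [a b [x [Lxa [Lxb Hab]]] | a m b _ IH1 _ IH2];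
  intros y Lyb.
- exists (x `&` y)%O. split; [exact (leIr y x)|].
  destruct (H4 Lxb Lyb) as [M _]. exact (idl (leIl x y) M Lxb Lxa Hab).
- destruct (IH2 y Lyb) as [v1 [h1 Lv1m]]. destruct (IH1 v1 Lv1m) as [v2 [h2 Lv2b]].
  exists v2; split; [exact (le_trans h2 h1)|exact Lv2b].
Qed.

Lemma CP z p q t : L z p -> L z q -> gl p t -> gl t q -> L z t.
Proof.
intros Lp Lq Hpt Htq.
destruct (M1 Hpt Lp) as [v [Hzv Lvt]]. destruct (M2 Htq Lq) as [u [Huz Lut]].
exact (CV Huz Hzv Lut Lvt).
Qed.

Lemma gl_car_l a b : gl a b -> car a.
Proof. unfold glued_le; intros H; induction H as [a b [x [Lxa _]]|]; [exists x; exact Lxa|auto]. Qed.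
Lemma gl_car_r a b : gl a b -> car b.
Proof. unfold glued_le; intros H; induction H as [a b [x [_ [Lxb _]]]|]; [exists x; exact Lxb|auto]. Qed.

Lemma GL1 z a b : gl a b -> L z a -> L z b -> le z a b.
Proof.
intros H; have H' := H; unfold glued_le in H;
  induction H as [a b [x [Lxa [Lxb Hab]]] | a m b Ha IH1 Hb IH2]; intros La Lb.
- exact (agr Lxa Lxb La Lb Hab).
- have Lm := CP La Lb Ha Hb. exact (ltrans La Lm Lb (IH1 Ha La Lm) (IH2 Hb Lm Lb)).
Qed.

Lemma GL2 z a b : L z a -> L z b -> le z a b -> gl a b.
Proof. intros. apply t_step. exists z; auto. Qed.
Lemma gl_refl a : car a -> gl a a.
Proof. intros [x Lx]. exact (GL2 Lx Lx (lrefl Lx)). Qed.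
Lemma gl_tr a b c : gl a b -> gl b c -> gl a c.
Proof. intros; eapply t_trans; eauto. Qed.
Lemma gl_anti a b : gl a b -> gl b a -> a = b.
Proof.
intros Hab Hba. destruct (gl_car_l Hab) as [z Lza].
have Lzb := CP Lza Lza Hab Hba.
exact (lanti Lza Lzb (GL1 Hab Lza Lzb) (GL1 Hba Lzb Lza)).
Qed.

Definition isbot x b := L x b /\ forall c, L x c -> le x b c.
Lemma bot_exx x a : L x a -> exists b, isbot x b.
Proof. intros La. exact (bot_ex (proj1 (Hlat x)) (@Hflb x) (Hlat x) La). Qed.
Lemma top_exx x a : L x a -> exists b, L x b /\ forall c, L x c -> le x c b.
Proof. intros La. exact (top_ex (Hlat x) (@Hflb x) La). Qed.

Lemma F2 (y : S) : forall x b0 b1, (x <= y)%O -> isbot x b0 -> isbot y b1 -> gl b0 b1.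
Proof.
intros x; induction x as [x IH] using (well_founded_ind wfS_gt).
intros b0 b1 Hxy [Lb0 Hb0] [Lb1 Hb1].
destruct (classic (x = y)) as [->|Hne].
- exact (GL2 Lb0 Lb1 (Hb0 b1 Lb1)).
- destruct (cov_ex (ltS Hxy Hne)) as [x1 [Hc Hx1y]].
  destruct (H3 Hc) as [c [Lxc Lx1c]].
  have Hxx1 : (x <= x1)%O := proj1 (proj2 (proj2 Hc)).
  have Hne1 : x <> x1 := proj1 (proj2 (proj2 (proj2 Hc))).
  destruct (bot_exx Lx1c) as [b2 [Lb2 Hb2]].
  have Lxb2 := idl Hxx1 Lxc Lx1c Lb2 (Hb2 c Lx1c).
  apply (gl_tr (GL2 Lb0 Lxb2 (Hb0 b2 Lxb2))).
  exact (IH x1 (ltS Hxx1 Hne1) b2 b1 Hx1y (conj Lb2 Hb2) (conj Lb1 Hb1)).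
Qed.

Definition Nw (w y : S) := (w <= y)%O /\ exists c, L w c /\ L y c.

Lemma N_join w y1 y2 : Nw w y1 -> Nw w y2 -> Nw w (y1 `|` y2)%O.
Proof.
intros [h1 [c1 [Lw1 L1]]] [h2 [c2 [Lw2 L2]]].
split; [exact (le_trans h1 (leUl y1 y2))|].
destruct (lub_ex Lw1 Lw2) as [c [Lc [H1c [H2c _]]]].
exists c; split; [exact Lc|].
exact (proj2 (H4 (filt h1 Lw1 L1 Lc H1c) (filt h2 Lw2 L2 Lc H2c))).
Qed.

Lemma N_max w a c : (w <= a)%O -> L w c ->
  exists a', Nw w a' /\ (a' <= a)%O /\ forall v, Nw w v -> (v <= a)%O -> (v <= a')%O.
Proof.
intros Hwa Lc.
destruct (wf_min wfS_gt (P := fun v => Nw w v /\ (v <= a)%O)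
   (conj (conj (le_refl w) (ex_intro _ c (conj Lc Lc))) Hwa)) as [m [[Nm Hma] Hmin]].
exists m; split; [exact Nm|split; [exact Hma|]].
intros v Nv Hva.
have P' : Nw w (v `|` m)%O /\ (v `|` m <= a)%O.
{ split; [exact (N_join Nv Nm)|by rewrite leUx Hva Hma]. }
destruct (classic (m = (v `|` m)%O)) as [E|Hne].
- rewrite E; exact (leUl v m).
- exfalso. apply (Hmin _ P'). exact (ltS (leUr m v) Hne).
Qed.

Local Notation R0 := (fun a b => exists x, L x a /\ L x b /\ le x a b).

Lemma JCa (a : S) : forall w, (w <= a)%O -> forall q, L a q -> forall r1 r2 j,
  L w r1 -> L w r2 -> is_lub (L w) (le w) j r1 r2 -> gl r1 q -> gl r2 q -> gl j q.
Proof.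
intros w; induction w as [w IH] using (well_founded_ind wfS_gt).
intros Hwa q Laq r1 r2 j L1 L2 Hj G1 G2.
destruct (classic (w = a)) as [->|Hne].
{ destruct Hj as [Lj [_ [_ Hleast]]]. apply (GL2 Lj Laq).
  apply Hleast; [exact Laq| exact (GL1 G1 L1 Laq) | exact (GL1 G2 L2 Laq)]. }
destruct (N_max Hwa L1) as [a' [[Hwa' [c [Lwc La'c]]] [Ha'a Hmax]]].
destruct (cov_ex (ltS Hwa Hne)) as [w1 [Hc Hw1a]].
have Nw1 : Nw w w1 := conj (proj1 (proj2 (proj2 Hc))) (H3 Hc).
have Hw1a' := Hmax w1 Nw1 Hw1a.
have Hwa'lt : (w < a')%O :=
  lt_le_trans (ltS (proj1 (proj2 (proj2 Hc))) (proj1 (proj2 (proj2 (proj2 Hc))))) Hw1a'.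
destruct (bot_exx La'c) as [b' [La'b' Hb']].
have Lwb' := idl Hwa' Lwc La'c La'b' (Hb' c La'c).
destruct (bot_exx Laq) as [ba [Laba Hba]].
have Gb'q : gl b' q :=
  gl_tr (F2 Ha'a (conj La'b' Hb') (conj Laba Hba)) (GL2 Laba Laq (Hba q Laq)).
have G : forall t q0, clos_trans_1n U R0 t q0 -> q0 = q -> L w t ->
   forall l, is_lub (L w) (le w) l t b' -> gl l q.
{ intros t q0 H; induction H as [t y Hs | t y z Hs Hrest IH']; intros Eq Lwt l Hl.
  - subst y. destruct Hs as [x [Lxt [Lxq Htq]]].
    set v := ((x `|` w) `&` a)%O.
    have Lxw_t := proj2 (H4 Lxt Lwt).
    have Lxw_q := filt (leUl x w) Lxt Lxw_t Lxq Htq.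
    have Lvq : L v q := proj1 (H4 Lxw_q Laq).
    have Hwv : (w <= v)%O by rewrite lexI (leUr w x) Hwa.
    have Hvxw : (v <= x `|` w)%O := leIl _ _.
    have Lvt := CV Hwv Hvxw Lwt Lxw_t.
    have Hvtq : le v t q := agr Lxt Lxq Lvt Lvq Htq.
    have Nv : Nw w v := conj Hwv (ex_intro _ t (conj Lwt Lvt)).
    have Hva' := Hmax v Nv (leIr a (x `|` w)%O).
    have Lvb' := CV Hwv Hva' Lwb' La'b'.
    destruct (lub_ex Lvt Lvb') as [lv Hlv].
    have Lwlv := lub_idl Hwv Lwt Lvt Lwb' Lvb' Hlv.
    destruct Hlv as [Lvlv [Htlv [Hb'lv Hlvleast]]].
    destruct Hl as [Lwl [_ [_ Hlleast]]].
    have Hllv : le w l lv :=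
      Hlleast lv Lwlv (agr Lvt Lvlv Lwt Lwlv Htlv) (agr Lvb' Lvlv Lwb' Lwlv Hb'lv).
    apply (gl_tr (GL2 Lwl Lwlv Hllv)). apply (GL2 Lvlv Lvq).
    apply Hlvleast; [exact Lvq|exact Hvtq|exact (GL1 Gb'q Lvb' Lvq)].
  - subst z. destruct Hs as [x [Lxt [Lxy Hty]]].
    have Gyq : gl y q := clos_t1n_trans _ _ _ _ Hrest.
    set v := ((x `|` w) `&` a)%O.
    have Lxw_t := proj2 (H4 Lxt Lwt).
    have Lxw_y := filt (leUl x w) Lxt Lxw_t Lxy Hty.
    have Hwv : (w <= v)%O by rewrite lexI (leUr w x) Hwa.
    have Hvxw : (v <= x `|` w)%O := leIl _ _.
    destruct (M2 Gyq Laq) as [u' [Hu'a Lu'y]].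
    have Hm : ((x `|` w) `&` u' <= v)%O
      by rewrite lexI leIl (le_trans (leIr u' (x `|` w)%O) Hu'a).
    have Lvy : L v y := CV Hm Hvxw (proj1 (H4 Lxw_y Lu'y)) Lxw_y.
    have Lvt := CV Hwv Hvxw Lwt Lxw_t.
    have Hvty : le v t y := agr Lxt Lxy Lvt Lvy Hty.
    have Nv : Nw w v := conj Hwv (ex_intro _ t (conj Lwt Lvt)).
    have Hva : (v <= a)%O := leIr a (x `|` w)%O.
    have Hva' := Hmax v Nv Hva.
    have Lvb' := CV Hwv Hva' Lwb' La'b'.
    destruct Hl as [Lwl [_ [_ Hlleast]]].
    destruct (classic (v = w)) as [Evw|Hvw].
    + rewrite Evw in Lvy Hvty.
      destruct (lub_ex Lvy Lwb') as [l2 Hl2].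
      have Gl2 := IH' (erefl q) Lvy l2 Hl2.
      destruct Hl2 as [Ll2 [Hyl2 [Hbl2 _]]].
      apply (gl_tr (GL2 Lwl Ll2 (Hlleast l2 Ll2 (ltrans Lwt Lvy Ll2 Hvty Hyl2) Hbl2))).
      exact Gl2.
    + have Hwvlt : (w < v)%O by apply ltS; [exact Hwv|intros E; apply Hvw; rewrite E].
      destruct (lub_ex Lvy Lvb') as [l3 Hl3].
      have Gl3 := IH v Hwvlt Hva q Laq y b' l3 Lvy Lvb' Hl3 Gyq Gb'q.
      destruct (lub_ex Lvt Lvb') as [lv Hlv].
      have Lwlv := lub_idl Hwv Lwt Lvt Lwb' Lvb' Hlv.
      destruct Hlv as [Lvlv [Htlv [Hb'lv Hlvleast]]].
      have Hllv : le w l lv :=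
        Hlleast lv Lwlv (agr Lvt Lvlv Lwt Lwlv Htlv) (agr Lvb' Lvlv Lwb' Lwlv Hb'lv).
      destruct Hl3 as [Ll3 [Hyl3 [Hbl3 _]]].
      have Hlvl3 : le v lv l3 := Hlvleast l3 Ll3 (ltrans Lvt Lvy Ll3 Hvty Hyl3) Hbl3.
      exact (gl_tr (GL2 Lwl Lwlv Hllv) (gl_tr (GL2 Lvlv Ll3 Hlvl3) Gl3)). }
destruct (lub_ex L1 Lwb') as [l1 Hl1]. destruct (lub_ex L2 Lwb') as [l2 Hl2].
have Gl1 := G r1 q (clos_trans_t1n _ _ _ _ G1) (erefl q) L1 l1 Hl1.
have Gl2 := G r2 q (clos_trans_t1n _ _ _ _ G2) (erefl q) L2 l2 Hl2.
destruct Hl1 as [Ll1 [Hrl1 [Hbl1 _]]]. destruct Hl2 as [Ll2 [Hrl2 [Hbl2 _]]].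
have La'l1 := filt Hwa' Lwb' La'b' Ll1 Hbl1.
have La'l2 := filt Hwa' Lwb' La'b' Ll2 Hbl2.
destruct (lub_ex La'l1 La'l2) as [J HJ].
have GJ := IH a' Hwa'lt Ha'a q Laq l1 l2 J La'l1 La'l2 HJ Gl1 Gl2.
have LwJ := lub_idl Hwa' Ll1 La'l1 Ll2 La'l2 HJ.
destruct HJ as [La'J [Hl1J [Hl2J _]]].
destruct Hj as [Lj [_ [_ Hjleast]]].
have Hr1J := ltrans L1 Ll1 LwJ Hrl1 (agr La'l1 La'J Ll1 LwJ Hl1J).
have Hr2J := ltrans L2 Ll2 LwJ Hrl2 (agr La'l2 La'J Ll2 LwJ Hl2J).
exact (gl_tr (GL2 Lj LwJ (Hjleast J LwJ Hr1J Hr2J)) GJ).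
Qed.

Lemma JC w r1 r2 j q : L w r1 -> L w r2 -> is_lub (L w) (le w) j r1 r2 ->
  gl r1 q -> gl r2 q -> gl j q.
Proof.
intros L1 L2 Hj G1 G2.
destruct (gl_car_r G1) as [a Laq].
have Hlow : forall r, L w r -> gl r q -> L (w `&` a)%O r.
{ intros r Lr Gr. destruct (M2 Gr Laq) as [u1 [Hu1a Lu1]].
  have Hm : (w `&` u1 <= w `&` a)%O by rewrite lexI leIl (le_trans (leIr u1 w) Hu1a).
  exact (CV Hm (leIl w a) (proj1 (H4 Lr Lu1)) Lr). }
have L1' := Hlow r1 L1 G1. have L2' := Hlow r2 L2 G2.
destruct (lub_ex L1' L2') as [j' Hj'].
have Gj' := JCa (leIr a w) Laq L1' L2' Hj' G1 G2.
destruct Hj' as [Lj' [H1j' [H2j' _]]].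
have Lwj' := filt (leIl w a) L1' L1 Lj' H1j'.
destruct Hj as [Lj [_ [_ Hjleast]]].
apply (gl_tr (GL2 Lj Lwj' (Hjleast j' Lwj' (agr L1' Lj' L1 Lwj' H1j') (agr L2' Lj' L2 Lwj' H2j')))).
exact Gj'.
Qed.

Lemma EXL (z : S) : forall x, (x <= z)%O -> forall r, L x r ->
  exists Lam b, isbot z b /\ L z Lam /\ gl r Lam /\ forall q, gl r q -> gl b q -> gl Lam q.
Proof.
intros x; induction x as [x IH] using (well_founded_ind wfS_gt).
intros Hxz r Lr. destruct (classic (x = z)) as [<-|Hne].
- destruct (bot_exx Lr) as [b Hb]. exists r, b.
  split; [exact Hb|split; [exact Lr|split; [exact (gl_refl (ex_intro _ x Lr))|auto]]].
- destruct (cov_ex (ltS Hxz Hne)) as [x1 [Hc Hx1z]].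
  destruct (H3 Hc) as [c [Lxc Lx1c]].
  have Hxx1 : (x <= x1)%O := proj1 (proj2 (proj2 Hc)).
  have Hne1 : x <> x1 := proj1 (proj2 (proj2 (proj2 Hc))).
  destruct (bot_exx Lx1c) as [b1 [Lb1 Hb1]].
  have Lxb1 := idl Hxx1 Lxc Lx1c Lb1 (Hb1 c Lx1c).
  destruct (lub_ex Lr Lxb1) as [r1 Hr1].
  have Hr1' := Hr1. destruct Hr1' as [Lr1 [Hrr1 [Hb1r1 _]]].
  have Lx1r1 := filt Hxx1 Lxb1 Lb1 Lr1 Hb1r1.
  destruct (IH x1 (ltS Hxx1 Hne1) Hx1z r1 Lx1r1) as [Lam [b [Hb [LLam [GLam HLam]]]]].
  exists Lam, b. split; [exact Hb|split; [exact LLam|split]].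
  + exact (gl_tr (GL2 Lr Lr1 Hrr1) GLam).
  + intros q Grq Gbq. apply HLam; [|exact Gbq].
    exact (JC Lr Lxb1 Hr1 Grq (gl_tr (F2 Hx1z (conj Lb1 Hb1) Hb) Gbq)).
Qed.

Lemma join_ex a b : car a -> car b -> exists j, is_lub car gl j a b.
Proof.
intros [x La] [y Lb].
destruct (EXL (leUl x y) La) as [A1 [ba [Hba [LA1 [GA1 HA1]]]]].
destruct (EXL (leUr y x) Lb) as [B1 [bb [Hbb [LB1 [GB1 HB1]]]]].
destruct (lub_ex LA1 LB1) as [j Hj].
exists j. have Hj' := Hj. destruct Hj' as [Lj [HAj [HBj _]]].
split; [exists (x `|` y)%O; exact Lj|split; [|split]].
- exact (gl_tr GA1 (GL2 LA1 Lj HAj)).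
- exact (gl_tr GB1 (GL2 LB1 Lj HBj)).
- intros q _ Gaq Gbq.
  destruct (M1 Gaq La) as [v1 [h1 Lv1]]. destruct (M1 Gbq Lb) as [v2 [h2 Lv2]].
  have Lvq := proj2 (H4 Lv1 Lv2).
  have Hzv : (x `|` y <= v1 `|` v2)%O
    by rewrite leUx (le_trans h1 (leUl v1 v2)) (le_trans h2 (leUr v2 v1)).
  destruct (bot_exx Lvq) as [bv [Lbv Hbv]].
  have Gbvq := GL2 Lbv Lvq (Hbv q Lvq).
  exact (JC LA1 LB1 Hj (HA1 q Gaq (gl_tr (F2 Hzv Hba (conj Lbv Hbv)) Gbvq))
          (HB1 q Gbq (gl_tr (F2 Hzv Hbb (conj Lbv Hbv)) Gbvq))).
Qed.

Lemma alpha_ex u : car u -> exists x, L x u /\ forall y, L y u -> (x <= y)%O.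
Proof.
intros [x0 L0].
destruct (wf_min wfS_lt (P := fun x => L x u) L0) as [m [Lm Hmin]].
exists m; split; [exact Lm|]. intros y Ly.
have Lmy := proj1 (H4 Lm Ly).
destruct (classic ((m `&` y)%O = m)) as [E|Hne].
- rewrite -E; exact (leIr y m).
- exfalso. exact (Hmin _ Lmy (ltS (leIl m y) Hne)).
Qed.

Lemma beta_ex u : car u -> exists x, L x u /\ forall y, L y u -> (y <= x)%O.
Proof.
intros [x0 L0].
destruct (wf_min wfS_gt (P := fun x => L x u) L0) as [m [Lm Hmin]].
exists m; split; [exact Lm|]. intros y Ly.
have Lmy := proj2 (H4 Lm Ly).
destruct (classic (m = (m `|` y)%O)) as [E|Hne].
- rewrite E; exact (leUr y m).
- exfalso. exact (Hmin _ Lmy (ltS (leUl m y) Hne)).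
Qed.

Lemma wf_Rl : well_founded (fun a b => gl a b /\ a <> b).
Proof.
intros b. destruct (classic (car b)) as [Cb|NCb].
2:{ constructor; intros a [Hab _]; exfalso; exact (NCb (gl_car_r Hab)). }
destruct (alpha_ex Cb) as [x [Lxb Hxmin]]. clear Cb.
revert b Lxb Hxmin.
induction x as [x IHx] using (well_founded_ind wfS_lt).
have Hwfb := slt_wf (proj1 (@Hlat x)) (@Hflb x).
intros b; induction b as [b IHb] using (well_founded_ind Hwfb); intros Lxb Hxmin.
constructor. intros a [Hab Hne].
destruct (alpha_ex (gl_car_l Hab)) as [y [Lya Hymin]].
destruct (M2 Hab Lxb) as [u [Hux Lua]].
have Hyx := le_trans (Hymin u Lua) Hux.
destruct (classic (y = x)) as [->|Hyx'].
- apply IHb; [|exact Lya|exact Hymin].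
  repeat split; [exact Lya|exact Lxb|exact (GL1 Hab Lya Lxb)|exact Hne].
- exact (IHx y (ltS Hyx Hyx') a Lya Hymin).
Qed.

Lemma wf_Rlr : well_founded (fun a b => gl b a /\ a <> b).
Proof.
intros b. destruct (classic (car b)) as [Cb|NCb].
2:{ constructor; intros a [Hab _]; exfalso; exact (NCb (gl_car_l Hab)). }
destruct (beta_ex Cb) as [x [Lxb Hxmax]]. clear Cb.
revert b Lxb Hxmax.
induction x as [x IHx] using (well_founded_ind wfS_gt).
have Hwfb := slt_wf (flip_poset (proj1 (@Hlat x))) (flip_fl (@Hflb x)).
intros b; induction b as [b IHb] using (well_founded_ind Hwfb); intros Lxb Hxmax.
constructor. intros a [Hba Hne].
destruct (beta_ex (gl_car_r Hba)) as [y [Lya Hymax]].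
destruct (M1 Hba Lxb) as [v [Hxv Lva]].
have Hxy := le_trans Hxv (Hymax v Lva).
destruct (classic (y = x)) as [->|Hyx'].
- apply IHb; [|exact Lya|exact Hymax].
  repeat split; [exact Lya|exact Lxb|exact (GL1 Hba Lxb Lya)|exact Hne].
- apply (IHx y); [|exact Lya|exact Hymax]. apply ltS; [exact Hxy|intros E; apply Hyx'; by rewrite E].
Qed.

Lemma cov_step a b : covers car gl a b -> exists x, L x a /\ L x b /\ le x a b.
Proof.
intros [Ca [Cb [Hab [Hne Hbtw]]]].
have K : forall t b0, clos_trans_1n U R0 t b0 -> b0 = b -> t = a ->
   exists x, L x a /\ L x b /\ le x a b.
{ intros t b0 H; induction H as [t y Hs | t y z Hs Hrest IH]; intros E1 E2.
  - subst y t. exact Hs.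
  - subst z t. have Cy : car y by destruct Hs as [x [_ [Ly _]]]; exists x.
    have Gay : gl a y := t_step _ _ _ _ Hs.
    have Gyb : gl y b := clos_t1n_trans _ _ _ _ Hrest.
    destruct (Hbtw y Cy Gay Gyb) as [E|E].
    + exact (IH (erefl b) E).
    + rewrite E in Hs. exact Hs. }
exact (K a b (clos_trans_t1n _ _ _ _ Hab) (erefl b) (erefl a)).
Qed.

Lemma covz z p q : covers car gl p q -> L z p -> L z q -> covers (L z) (le z) p q.
Proof.
intros [_ [_ [Gpq [Hne Hbtw]]]] Lp Lq.
split; [exact Lp|split; [exact Lq|split; [exact (GL1 Gpq Lp Lq)|split; [exact Hne|]]]].
intros t Lt Hpt Htq. apply Hbtw; [exists z; exact Lt|exact (GL2 Lp Lt Hpt)|exact (GL2 Lt Lq Htq)].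
Qed.

Lemma covz_rev z p q : covers (L z) (le z) p q -> covers car gl p q.
Proof.
intros [Lp [Lq [Hpq [Hne Hbtw]]]].
split; [exists z; exact Lp|split; [exists z; exact Lq|split; [exact (GL2 Lp Lq Hpq)|split; [exact Hne|]]]].
intros t _ Gpt Gtq. have Lt := CP Lp Lq Gpt Gtq.
exact (Hbtw t Lt (GL1 Gpt Lp Lt) (GL1 Gtq Lt Lq)).
Qed.

Lemma semimod : (forall x, semimodular (L x) (le x)) -> semimodular car gl.
Proof.
intros Hsm a b c Hbc Cab Cac j Hj.
destruct (cov_step Cab) as [x [Lxa [Lxb Hab]]].
destruct (cov_step Cac) as [y [Lya [Lyc Hac]]].
have Lza := proj2 (H4 Lxa Lya).
have Lzb := filt (leUl x y) Lxa Lza Lxb Hab.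
have Lzc := filt (leUr y x) Lya Lza Lyc Hac.
destruct (lub_ex Lzb Lzc) as [jz Hjz].
destruct (Hsm _ a b c Hbc (covz Cab Lza Lzb) (covz Cac Lza Lzc) jz Hjz) as [Cbj Ccj].
destruct Hj as [Cj [Gbj [Gcj Hjl]]].
destruct Hjz as [Ljz [Hbjz [Hcjz _]]].
have Gjjz := Hjl jz (ex_intro _ _ Ljz) (GL2 Lzb Ljz Hbjz) (GL2 Lzc Ljz Hcjz).
have Lzj := CP Lzb Ljz Gbj Gjjz.
have Cbj' := Cbj. destruct Cbj' as [_ [_ [_ [_ Hbtw]]]].
destruct (Hbtw j Lzj (GL1 Gbj Lzb Lzj) (GL1 Gjjz Lzj Ljz)) as [E|E].
- exfalso. subst j.
  destruct Cab as [_ [_ [_ [_ Hbtwab]]]].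
  destruct Cac as [_ [Cc [Gac [Hnac _]]]].
  destruct (Hbtwab c Cc Gac Gcj) as [E|E]; [apply Hnac; by rewrite E|exact (Hbc (esym E))].
- subst j. split; [exact (covz_rev Cbj)|exact (covz_rev Ccj)].
Qed.

Lemma UC (Hsm : semimodular car gl) : forall a b c j, covers car gl a b -> gl a c ->
  is_lub car gl j c b -> j = c \/ covers car gl c j.
Proof.
intros a; induction a as [a IH] using (well_founded_ind wf_Rlr).
intros b c j Cab Gac Hj.
have Hj0 := Hj. destruct Hj0 as [Cj [Gcj [Gbj Hjl]]].
have Cc := gl_car_r Gac.
have Cab' := Cab. destruct Cab' as [Ca [Cb [Gab [Hneab Hbtwab]]]].
destruct (classic (gl b c)) as [Gbc|NGbc].
{ left. exact (gl_anti (Hjl c Cc (gl_refl Cc) Gbc) Gcj). }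
destruct (classic (c = a)) as [->|Hca].
{ right. have -> : j = b by exact (gl_anti (Hjl b Cb Gab (gl_refl Cb)) Gbj). exact Cab. }
destruct (wf_min wf_Rl (P := fun t => gl a t /\ t <> a /\ gl t c) (conj Gac (conj Hca (gl_refl Cc))))
  as [dd [[Gad [Hda Gdc]] Hdmin]].
have Cd := gl_car_r Gad.
have Cad : covers car gl a dd.
{ split; [exact Ca|split; [exact Cd|split; [exact Gad|split; [intros E; apply Hda; by rewrite E|]]]].
  intros t Ct Gat Gtd. destruct (classic (t = a)) as [->|Hta]; [by left|right].
  apply NNPP; intros Htd. apply (Hdmin t); [split; [exact Gat|split; [exact Hta|exact (gl_tr Gtd Gdc)]]|].
  split; [exact Gtd|exact Htd]. }
have Hdb : dd <> b by intros E; apply NGbc; rewrite -E; exact Gdc.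
destruct (join_ex Cd Cb) as [j1 Hj1].
destruct (Hsm a dd b Hdb Cad Cab j1 Hj1) as [Cdj1 _].
destruct (join_ex Cc (proj1 Hj1)) as [j' Hj'].
have Hres := IH dd (conj Gad Hda) j1 c j' Cdj1 Gdc Hj'.
destruct Hj' as [Cj' [Gcj' [Gj1j' Hj'l]]].
destruct Hj1 as [Cj1 [Gdj1 [Gbj1 Hj1l]]].
have E : j = j'.
{ apply gl_anti.
  - exact (Hjl j' Cj' Gcj' (gl_tr Gbj1 Gj1j')).
  - exact (Hj'l j Cj Gcj (Hj1l j Cj (gl_tr Gdc Gcj) Gbj)). }
rewrite E; exact Hres.
Qed.

Lemma itlub (I : eqType) (x0 : U) (f : I -> U) (l : seq I) : car x0 -> (forall i, car (f i)) ->
  exists j, car j /\ gl x0 j /\ (forall i, i \in l -> gl (f i) j) /\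
    forall q, car q -> gl x0 q -> (forall i, i \in l -> gl (f i) q) -> gl j q.
Proof.
intros C0 Cf. induction l as [|i l IH].
- exists x0. split; [exact C0|split; [exact (gl_refl C0)|split; [intros i; by rewrite in_nil|]]].
  intros q _ G _; exact G.
- destruct IH as [j0 [Cj0 [G0 [Gf Hl0]]]].
  destruct (join_ex Cj0 (Cf i)) as [j1 [Cj1 [Gj0 [Gfi Hl1]]]].
  exists j1. split; [exact Cj1|split; [exact (gl_tr G0 Gj0)|split]].
  + intros i'; rewrite in_cons => /orP [/eqP ->|Hi']; [exact Gfi|exact (gl_tr (Gf i' Hi') Gj0)].
  + intros q Cq Gq Hq. apply Hl1; [exact Cq| |].
    * apply Hl0; [exact Cq|exact Gq|]. intros i' Hi'; apply Hq; by rewrite in_cons Hi' orbT.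
    * apply Hq; by rewrite in_cons eqxx.
Qed.

Lemma breadth (n : nat) (Hsm : semimodular car gl) (Hb : forall x, breadth_le (L x) (le x) n) :
  breadth_le car gl n.
Proof.
intros m phi Cphi Hemb.
set p := phi set0.
set Y := fun k : 'I_m => phi (setT :\ k).
have Gp : forall X, gl p (phi X) by intros X; apply Hemb; exact (sub0set X).
have Hsy : forall k j, k != j -> gl (phi [set k]) (Y j).
{ intros k j Hkj. apply Hemb. by rewrite sub1set in_setD1 Hkj in_setT. }
have HnY : forall k, ~ gl (phi [set k]) (Y k).
{ intros k H. have := proj1 (Hemb _ _) H. by rewrite sub1set in_setD1 eqxx. }
have Hs : forall k, exists s, (car s /\ gl p s /\ gl s (phi [set k]) /\ ~ gl s (Y k)) /\
     forall t, (car t /\ gl p t /\ gl t (phi [set k]) /\ ~ gl t (Y k)) -> ~ (gl t s /\ t <> s).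
{ intros k. apply (wf_min wf_Rl (x := phi [set k])).
  split; [exact (Cphi _)|split; [exact (Gp _)|split; [exact (gl_refl (Cphi _))|exact (HnY k)]]]. }
pose s := fun k => proj1_sig (constructive_indefinite_description _ (Hs k)).
have Hsk : forall k, (car (s k) /\ gl p (s k) /\ gl (s k) (phi [set k]) /\ ~ gl (s k) (Y k)) /\
     forall t, (car t /\ gl p t /\ gl t (phi [set k]) /\ ~ gl t (Y k)) -> ~ (gl t (s k) /\ t <> s k).
{ intros k. exact (proj2_sig (constructive_indefinite_description _ (Hs k))). }
have Hsm' : forall k, exists sm, car sm /\ gl p sm /\ gl sm (s k) /\ gl sm (Y k) /\
     covers car gl sm (s k).
{ intros k. destruct (Hsk k) as [[Cs [Gps [Gsphi NGs]]] Hmin].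
  have Hps : p <> s k. { intros E. apply NGs. rewrite -E. exact (Gp _). }
  destruct (wf_min wf_Rlr (P := fun t => car t /\ gl p t /\ gl t (s k) /\ t <> s k)
    (conj (gl_car_l Gps) (conj (gl_refl (gl_car_l Gps)) (conj Gps Hps))))
    as [sm [[Csm [Gpsm [Gsms Hsms]]] Hmax]].
  exists sm.
  have Cov : covers car gl sm (s k).
  { split; [exact Csm|split; [exact Cs|split; [exact Gsms|split; [exact Hsms|]]]].
    intros t Ct Gsmt Gts. destruct (classic (t = s k)) as [->|Hts]; [by right|left].
    apply NNPP; intros Htsm.
    apply (Hmax t); [split; [exact Ct|split; [exact (gl_tr Gpsm Gsmt)|split; [exact Gts|exact Hts]]]|].
    split; [exact Gsmt| intros E; apply Htsm; by rewrite E]. }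
  split; [exact Csm|split; [exact Gpsm|split; [exact Gsms|split; [|exact Cov]]]].
  apply NNPP; intros NG.
  apply (Hmin sm); [split; [exact Csm|split; [exact Gpsm|split; [exact (gl_tr Gsms Gsphi)|exact NG]]]|].
  split; [exact Gsms|exact Hsms]. }
pose sm := fun k => proj1_sig (constructive_indefinite_description _ (Hsm' k)).
have Hsmk : forall k, car (sm k) /\ gl p (sm k) /\ gl (sm k) (s k) /\ gl (sm k) (Y k) /\
     covers car gl (sm k) (s k).
{ intros k. exact (proj2_sig (constructive_indefinite_description _ (Hsm' k))). }
have Cp : car p := Cphi set0.
have Hin : forall k, k \in enum [set: 'I_m] by intros k; rewrite mem_enum in_setT.
destruct (itlub (enum [set: 'I_m]) Cp (fun k => proj1 (Hsmk k))) as [u [Cu [Gpu [Gsmu Hul]]]].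
have Gs_Y : forall i k, i != k -> gl (s i) (Y k).
{ intros i k Hik. exact (gl_tr (proj1 (proj2 (proj2 (proj1 (Hsk i))))) (Hsy i k Hik)). }
have GuY : forall k, gl u (Y k).
{ intros k. apply Hul; [exact (Cphi _)|exact (Gp _)|]. intros i _.
  destruct (eqVneq i k) as [->|Hik]; [exact (proj1 (proj2 (proj2 (proj2 (Hsmk k)))))|].
  exact (gl_tr (proj1 (proj2 (proj2 (Hsmk i)))) (Gs_Y i k Hik)). }
have Hc : forall k, exists c, is_lub car gl c u (s k).
{ intros k. exact (join_ex Cu (proj1 (proj1 (Hsk k)))). }
pose c := fun k => proj1_sig (constructive_indefinite_description _ (Hc k)).
have Hck : forall k, is_lub car gl (c k) u (s k).
{ intros k. exact (proj2_sig (constructive_indefinite_description _ (Hc k))). }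
have Covc : forall k, covers car gl u (c k).
{ intros k.
  destruct (UC Hsm (proj2 (proj2 (proj2 (proj2 (Hsmk k))))) (Gsmu k (Hin k)) (Hck k)) as [E|Cv];
    [|exact Cv].
  exfalso. apply (proj2 (proj2 (proj2 (proj1 (Hsk k))))).
  have Gsc := proj1 (proj2 (proj2 (Hck k))). rewrite E in Gsc. exact (gl_tr Gsc (GuY k)). }
destruct (beta_ex Cu) as [w [Lwu Hwmax]].
have Lwc : forall k, L w (c k).
{ intros k. destruct (cov_step (Covc k)) as [x [Lxu [Lxc Hxuc]]].
  have Hxw : (x <= w)%O := le_trans (leUl x w) (Hwmax _ (proj2 (H4 Lxu Lwu))).
  exact (filt Hxw Lxu Lwu Lxc Hxuc). }
destruct (top_exx Lwu) as [tw [Ltw Htw]].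
have Hps : forall X : {set 'I_m}, exists j, car j /\ gl u j /\
   (forall i, i \in enum X -> gl (c i) j) /\
   forall q, car q -> gl u q -> (forall i, i \in enum X -> gl (c i) q) -> gl j q.
{ intros X. apply itlub; [exact Cu|]. intros i; exact (proj1 (Hck i)). }
pose psi := fun X => proj1_sig (constructive_indefinite_description _ (Hps X)).
have Hpsi : forall X, car (psi X) /\ gl u (psi X) /\
   (forall i, i \in enum X -> gl (c i) (psi X)) /\
   forall q, car q -> gl u q -> (forall i, i \in enum X -> gl (c i) q) -> gl (psi X) q.
{ intros X. exact (proj2_sig (constructive_indefinite_description _ (Hps X))). }
have Lpsi : forall X, L w (psi X).
{ intros X. destruct (Hpsi X) as [_ [Gu [_ Hl]]]. apply (CP Lwu Ltw Gu).
  apply Hl; [exists w; exact Ltw|exact (GL2 Lwu Ltw (Htw u Lwu))|].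
  intros i _; exact (GL2 (Lwc i) Ltw (Htw _ (Lwc i))). }
apply (Hb w m psi Lpsi).
intros X Z. split.
- intros Hle. have G := GL2 (Lpsi X) (Lpsi Z) Hle.
  apply/subsetP => k kX. apply: NNPP => kZ.
  destruct (Hpsi X) as [_ [_ [HcX _]]]. destruct (Hpsi Z) as [_ [_ [_ HlZ]]].
  have GcY : gl (psi Z) (Y k).
  { apply HlZ; [exact (Cphi _)|exact (GuY k)|]. intros i iZ. rewrite mem_enum in iZ.
    have Hik : i != k by apply/eqP => E; apply kZ; rewrite -E; exact iZ.
    destruct (Hck i) as [_ [_ [_ Hil]]]. apply Hil; [exact (Cphi _)|exact (GuY k)|exact (Gs_Y i k Hik)]. }
  apply (proj2 (proj2 (proj2 (proj1 (Hsk k))))).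
  have kX' : k \in enum X by rewrite mem_enum.
  exact (gl_tr (proj1 (proj2 (proj2 (Hck k)))) (gl_tr (HcX k kX') (gl_tr G GcY))).
- move=> /subsetP HXZ. apply (fun G => GL1 G (Lpsi X) (Lpsi Z)).
  destruct (Hpsi X) as [_ [_ [_ HlX]]]. destruct (Hpsi Z) as [CZ [GuZ [HcZ _]]].
  apply HlX; [exact CZ|exact GuZ|]. intros i iX. apply HcZ. rewrite mem_enum. apply HXZ.
  by rewrite -mem_enum.
Qed.

End Glued.

Theorem theorem3p3 (n : nat) (d : Order.disp_t) (S : latticeType d) (U : Type)
    (L : S -> U -> Prop) (le : S -> U -> U -> Prop) :
  glued_system L le ->
  (forall x, semimodular (L x) (le x) /\ breadth_le (L x) (le x) n) ->
  semimodular (glued_carrier L) (glued_le L le) /\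
  breadth_le (glued_carrier L) (glued_le L le) n.
Proof.
intros HG Hx.
have Hsm := semimod HG (fun x => proj1 (Hx x)).
split; [exact Hsm|]. exact (breadth HG Hsm (fun x => proj2 (Hx x))).
Qed.
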